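(* Let $q\ge 2$ and let $f:H(2,q)\to\mathbb{R}$ be an additive function with $|S(f)|\le 2(q-1)$. Then one of the following holds: (1) $f\equiv 0$; (2) there exist $i\in\{1,2\}$, $k\in\{0,\dots,q-1\}$ and a constant $c\neq 0$ such that $f(x)=c$ for $x\in T_k(i,2)$ and $f(x)=0$ otherwise; (3) there exist $i\ne j$ in $\{1,2\}$, $k,m\in\{0,\dots,q-1\}$ and a constant $c\ne 0$ such that $f(x)=c$ for $x\in T_k(i,2)\setminus T_m(j,2)$, $f(x)=-c$ for $x\in T_m(j,2)\setminus T_k(i,2)$, and $f(x)=0$ otherwise.
   Context: The Hamming graph $H(N,q)$ has vertex set $\{0,1,\dots,q-1\}^N$, two words being adjacent iff they differ in exactly one coordinate. For $f:H(N,q)\to\mathbb{R}$, its support is $S(f)=\{x: f(x)\ne 0\}$. $T_k(i,N)$ denotes the set of vertices of $H(N,q)$ whose $i$-th coordinate equals $k$. For $f:H(N,q)\to\mathbb{R}$ ($N\ge1$), $i\in\{1,\dots,N\}$ and $k,m\in\{0,\dots,q-1\}$, define $g_{i,k,m}:H(N-1,q)\to\mathbb{R}$ by $g_{i,k,m}(t)=f(x)-f(y)$, where $x$ and $y$ are obtained from $t$ by inserting $k$, resp. $m$, as the $i$-th coordinate. The function $f$ is called additive if all functions $g_{i,k,m}$ are constant. *)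

(* Defs.v *)
From HB Require Import structures.
From mathcomp Require Import all_boot all_order all_algebra.
Set Implicit Arguments. Unset Strict Implicit. Unset Printing Implicit Defensive.
Import Order.TTheory GRing.Theory Num.Theory.
Local Open Scope ring_scope.

(* Vertices of H(N,q): words of length N over {0,..,q-1}; coordinates are
   indexed by 'I_N (coordinate i+1 of the paper is index i here). *)
Definition word (N q : nat) := {ffun 'I_N -> 'I_q}.

Definition supp (R : nzRingType) (N q : nat) (f : word N q -> R) : {set word N q} :=
  [set x | f x != 0].

Definition T (N q : nat) (k : 'I_q) (i : 'I_N) : {set word N q} :=
  [set x : word N q | x i == k].

Definition ins (N q : nat) (i : 'I_N.+1) (k : 'I_q) (t : word N q) : word N.+1 q :=
  [ffun j => if unlift i j is Some j' then t j' else k].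

Definition gfun (R : nzRingType) (N q : nat) (f : word N.+1 q -> R)
  (i : 'I_N.+1) (k m : 'I_q) (t : word N q) : R :=
  f (ins i k t) - f (ins i m t).

Definition additive_fun (R : nzRingType) (N q : nat) (f : word N.+1 q -> R) : Prop :=
  forall (i : 'I_N.+1) (k m : 'I_q), exists c : R, forall t, gfun f i k m t = c.

(* Main.v *)
Require Import Defs.
From HB Require Import structures.
From mathcomp Require Import all_boot all_order all_algebra.
From mathcomp Require Import zify.
Import Order.TTheory GRing.Theory Num.Theory.
Set Implicit Arguments. Unset Strict Implicit.

Lemma natlem q al al' be be' : (1 < q -> 1 <= al -> 1 <= be -> al+al' = q -> be+be' = q ->
  al*be' + al'*be <= 2*(q-1) ->
  (al' = 0 /\ be' = 0) \/ (al' = 0 /\ be' = 1) \/ (al' = 1 /\ be' = 0) \/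
  (al' = 1 /\ be' = 1 /\ al*be' + al'*be = 2*(q-1)) \/ (al = 1 /\ be = 1 /\ al*be' + al'*be = 2*(q-1)))%N.
Proof.
move=> q1 a1 b1 ea eb h.
case: al' ea h => [|al'] ea h.
  have : be' <= 1 by nia. case: be' {eb} h => [|[|]]; lia.
case: be' eb h => [|be'] eb h.
  have : al' = 0 by nia. lia.
case: al a1 ea h => [//|a] _ ea h.
case: be b1 eb h => [//|b] _ eb h.
have e1 : a*be' + al'*b = 0 by nia.
have : a * be' = 0 /\ al' * b = 0 by lia.
case=> /eqP; rewrite muln_eq0 => /orP [] /eqP h1 /eqP; rewrite muln_eq0 => /orP [] /eqP h2; subst; nia.
Qed.

Local Open Scope ring_scope.
Definition i0 : 'I_2 := ord0.
Definition i1 : 'I_2 := ord_max.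
Definition pw q (a b : 'I_q) : word 2 q := [ffun i : 'I_2 => if i == i0 then a else b].
Lemma pwE q (x : word 2 q) : x = pw (x i0) (x i1).
Proof. apply/ffunP => -[[|[|n]] Hn]; rewrite ffunE //=; congr (x _); exact: val_inj. Qed.
Lemma pw0 q (a b : 'I_q) : pw a b i0 = a.
Proof. by rewrite ffunE eqxx. Qed.
Lemma pw1 q (a b : 'I_q) : pw a b i1 = b.
Proof. by rewrite ffunE. Qed.
Lemma ins0 q (a b : 'I_q) : ins i0 a [ffun=> b] = pw a b.
Proof.
apply/ffunP => j; rewrite !ffunE.
by case: unliftP => [j' ->|->]; rewrite ?ffunE.
Qed.

Lemma decomp (R : realFieldType) q (f : word 2 q -> R) : additive_fun f ->
  forall a0 b0, f (pw a0 b0) = 0 -> forall a b, f (pw a b) = f (pw a b0) + f (pw a0 b).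
Proof.
move=> add a0 b0 z a b.
have [c Hc] := add i0 a a0.
have h1 := Hc [ffun=> b]; have h2 := Hc [ffun=> b0].
rewrite /gfun !ins0 in h1 h2.
rewrite z subr0 in h2.
by rewrite h2 -h1 subrK.
Qed.

Theorem lemma3 (R : realFieldType) (q : nat) (f : word 2 q -> R) :
  (1 < q)%N -> additive_fun f -> (#|supp f| <= 2 * (q - 1))%N ->
  (forall x, f x = 0)
  \/ (exists (i : 'I_2) (k : 'I_q) (c : R), c != 0 /\
        forall x, f x = if x \in T k i then c else 0)
  \/ (exists (i j : 'I_2) (k m : 'I_q) (c : R), i != j /\ c != 0 /\
        forall x, f x = if (x \in T k i) && (x \notin T m j) then c
                        else if (x \in T m j) && (x \notin T k i) then - c
                        else 0).
Proof.
move=> q1 add hs.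
have [x0 /eqP fx0 | Hn] := pickP (fun x => f x == 0); last first.
  exfalso.
  have : supp f = setT by apply/setP => x; rewrite !inE Hn.
  move=> e; move: hs; rewrite e cardsT card_ffun !card_ord; nia.
set a0 := x0 i0; set b0 := x0 i1.
rewrite (pwE x0) -/a0 -/b0 in fx0.
set U := fun a => f (pw a b0); set V := fun b => f (pw a0 b).
have HP : forall a b, f (pw a b) = U a + V b by exact: decomp.
have HF : forall x, f x = U (x i0) + V (x i1) by move=> x; rewrite {1}(pwE x).
set A := [set a | U a == 0]; set B := [set b | V b == 0].
have a0A : a0 \in A by rewrite inE /U fx0.
have b0B : b0 \in B by rewrite inE /V fx0.
set S := [set ab : 'I_q * 'I_q | f (pw ab.1 ab.2) != 0].
have hS : (#|S| <= #|supp f|)%N.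
  have inj : injective (fun ab : 'I_q * 'I_q => pw ab.1 ab.2).
    move=> [a b] [a' b'] /= e; apply/eqP; rewrite xpair_eqE.
    by rewrite -{1}(pw0 a b) -{2}(pw1 a b) e pw0 pw1 !eqxx.
  rewrite -(card_imset S inj); apply: subset_leq_card.
  apply/subsetP => x /imsetP [ab]; rewrite !inE => h ->; exact: h.
set S0 := setX A (~: B) :|: setX (~: A) B.
have S0S : S0 \subset S.
  apply/subsetP => -[a b]; rewrite !inE /= HP => /orP [] /andP [ha hb].
    by rewrite (eqP ha) add0r.
  by rewrite (eqP hb) addr0.
have cS0 : #|S0| = (#|A| * #|~: B| + #|~: A| * #|B|)%N.
  rewrite cardsU !cardsX.
  suff -> : setX A (~: B) :&: setX (~: A) B = set0 by rewrite cards0 subn0.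
  apply/setP => -[a b]; rewrite !inE /=.
  by case: (U a == 0); case: (V b == 0).
have cA := cardsC A; have cB := cardsC B.
rewrite card_ord in cA cB.
have hA1 : (1 <= #|A|)%N by apply/card_gt0P; exists a0.
have hB1 : (1 <= #|B|)%N by apply/card_gt0P; exists b0.
have hle : (#|A| * #|~: B| + #|~: A| * #|B| <= 2 * (q - 1))%N.
  rewrite -cS0; apply: leq_trans (subset_leq_card S0S) _; exact: leq_trans hS hs.
have Zlem : (#|A| * #|~: B| + #|~: A| * #|B| = 2 * (q - 1))%N ->
    forall a b, a \notin A -> b \notin B -> U a + V b = 0.
  move=> eq a b ha hb; apply/eqP; apply: contraT => hne.
  have : (#|(a, b) |: S0| <= #|S|)%N.
    apply: subset_leq_card; rewrite subUset S0S andbT sub1set inE /= HP hne //.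
  rewrite cardsU1 cS0 eq !inE /=; move: ha hb; rewrite !inE => ha hb; rewrite (negbTE ha) (negbTE hb) /=.
  by move=> h; have := leq_trans h (leq_trans hS hs); rewrite add1n ltnn.
have [[e1 e2]|[[e1 e2]|[[e1 e2]|[[e1 [e2 eq]]|[e1 [e2 eq]]]]]] :=
  natlem q1 hA1 hB1 cA cB hle.
- left => x; rewrite HF.
  have /eqP := cards0_eq e1; have /eqP := cards0_eq e2.
  rewrite -!subset0 => /subsetP sB /subsetP sA.
  have : x i0 \in A by apply: contraT => h; move: (sA (x i0)); rewrite in_setC h in_set0 => /(_ isT).
  have : x i1 \in B by apply: contraT => h; move: (sB (x i1)); rewrite in_setC h in_set0 => /(_ isT).
  by rewrite !inE => /eqP -> /eqP ->; rewrite addr0.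
- have [m hm] := cards1P (introT eqP e2).
  right; left; exists i1, m, (V m); split.
    have : m \in ~: B by rewrite hm set11.
    by rewrite !inE.
  move=> x; rewrite HF inE.
  have /eqP := cards0_eq e1; rewrite -subset0 => /subsetP sA.
  have : x i0 \in A by apply: contraT => h; move: (sA (x i0)); rewrite in_setC h in_set0 => /(_ isT).
  rewrite inE => /eqP ->; rewrite add0r.
  case: eqP => [-> //|ne].
  have : x i1 \notin ~: B by rewrite hm inE; apply/eqP.
  by rewrite !inE negbK => /eqP.
- have [k hk] := cards1P (introT eqP e1).
  right; left; exists i0, k, (U k); split.
    have : k \in ~: A by rewrite hk set11.
    by rewrite !inE.
  move=> x; rewrite HF inE.
  have /eqP := cards0_eq e2; rewrite -subset0 => /subsetP sB.
  have : x i1 \in B by apply: contraT => h; move: (sB (x i1)); rewrite in_setC h in_set0 => /(_ isT).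
  rewrite inE => /eqP ->; rewrite addr0.
  case: eqP => [-> //|ne].
  have : x i0 \notin ~: A by rewrite hk inE; apply/eqP.
  by rewrite !inE negbK => /eqP.
- have [k hk] := cards1P (introT eqP e1); have [m hm] := cards1P (introT eqP e2).
  have HA : forall a, (U a == 0) = (a != k).
    by move=> a; have := congr1 (fun S : {set 'I_q} => a \in S) hk; rewrite /=; rewrite !inE => <-; rewrite negbK.
  have HB : forall b, (V b == 0) = (b != m).
    by move=> b; have := congr1 (fun S : {set 'I_q} => b \in S) hm; rewrite /=; rewrite !inE => <-; rewrite negbK.
  have Z := Zlem eq.
  right; right; exists i0, i1, k, m, (U k); split => //; split.
    by rewrite HA negbK.
  move=> x; rewrite HF !inE.
  have Zkm : U k + V m = 0 by apply: Z; rewrite inE ?HA ?HB negbK.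
  have Uk0 : forall a, a != k -> U a = 0 by move=> a; rewrite -HA => /eqP.
  have Vm0 : forall b, b != m -> V b = 0 by move=> b; rewrite -HB => /eqP.
  case: (eqVneq (x i0) k) => [->|nk]; case: (eqVneq (x i1) m) => [->|nm] //=.
  + by rewrite Vm0 // addr0.
  + rewrite Uk0 // add0r.
    by apply/eqP; rewrite -addr_eq0 addrC Zkm.
  + by rewrite Uk0 // Vm0 // addr0.
- have hA : A = [set a0].
    have [k hk] := cards1P (introT eqP e1); move: a0A; rewrite hk inE => /eqP e.
    by rewrite e.
  have hB : B = [set b0].
    have [k hk] := cards1P (introT eqP e2); move: b0B; rewrite hk inE => /eqP e.
    by rewrite e.
  have HA : forall a, (U a == 0) = (a == a0).
    by move=> a; have := congr1 (fun S : {set 'I_q} => a \in S) hA; rewrite /=; rewrite !inE.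
  have HB : forall b, (V b == 0) = (b == b0).
    by move=> b; have := congr1 (fun S : {set 'I_q} => b \in S) hB; rewrite /=; rewrite !inE.
  have Z := Zlem eq.
  have [a1 a1A] : exists a1, a1 \notin A.
    have : (0 < #|~: A|)%N by lia.
    by move/card_gt0P => [a1]; rewrite inE => h; exists a1.
  have [b1 b1B] : exists b1, b1 \notin B.
    have : (0 < #|~: B|)%N by lia.
    by move/card_gt0P => [b1]; rewrite inE => h; exists b1.
  right; right; exists i0, i1, a0, b0, (- U a1); split => //; split.
    by rewrite oppr_eq0; rewrite inE in a1A.
  move=> x; rewrite HF !inE.
  have Ua0 : U a0 = 0 by apply/eqP; rewrite HA.
  have Vb0 : V b0 = 0 by apply/eqP; rewrite HB.
  case: (eqVneq (x i0) a0) => [->|nk]; case: (eqVneq (x i1) b0) => [->|nm] //=.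
  + by rewrite Ua0 Vb0 addr0.
  + rewrite Ua0 add0r.
    apply/eqP; rewrite -addr_eq0 addrC; apply/eqP/Z => //.
    by rewrite inE HB.
  + rewrite Vb0 addr0 opprK.
    have hx : x i0 \notin A by rewrite inE HA.
    have e3 := Z _ _ hx b1B; have e4 := Z _ _ a1A b1B.
    by apply/eqP; rewrite -(subr_eq0) -(addrK (V b1) (U (x i0))) e3 -(addrK (V b1) (U a1)) e4 subrr.
  + by apply: Z; rewrite inE ?HA ?HB.
Qed.
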